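(* Suppose $c\ge2\tau^2$. For every $t\ge0$, let $s(t)$ be the largest multiple of $\tau$ with $s(t)\le t$. Then the FedSPS iterates satisfy (pathwise) $$R_t:=\frac1n\sum_{i=1}^n\|\bar x_t-x_t^i\|^2\le\frac1{2n\tau}\sum_{i=1}^n\sum_{j=s(t)}^{t-1}\gamma_j^i\big[F_i(x_j^i,\xi_j^i)-\ell_i^\star\big]$$ (the sum over $j$ being empty, and $R_t=0$, when $t=s(t)$).
   Context: For each $i\in[n]$, $\mathcal D_i$ is a probability distribution on $\Omega_i$, $F_i:\mathbb R^d\times\Omega_i\to\mathbb R$ with $F_i(\cdot,\xi)$ differentiable for $\xi\in\operatorname{supp}(\mathcal D_i)$; $F_i^\star:=\inf_{\xi\in\operatorname{supp}(\mathcal D_i),x}F_i(x,\xi)$ and $\ell_i^\star\le F_i^\star$ are given reals. FedSPS with parameters $c,\gamma_b>0$ and communication period integer $\tau\ge1$: $x_0^i=x_0$; at each $t$, client $i$ draws $\xi_t^i\sim\mathcal D_i$, sets $g_t^i:=\nabla F_i(x_t^i,\xi_t^i)$, $\gamma_t^i:=\min\{\frac{F_i(x_t^i,\xi_t^i)-\ell_i^\star}{c\|g_t^i\|^2},\gamma_b\}$ (first term $+\infty$ if $g_t^i=0$); if $t+1$ is a multiple of $\tau$, $x_{t+1}^i:=\frac1n\sum_j(x_t^j-\gamma_t^jg_t^j)$ for all $i$, else $x_{t+1}^i:=x_t^i-\gamma_t^ig_t^i$. $\bar x_t:=\frac1n\sum_ix_t^i$. *)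

(* Defs.v *)
From HB Require Import structures.
From mathcomp Require Import all_boot all_order all_algebra.
From mathcomp Require Import all_classical all_reals all_analysis.
Set Implicit Arguments. Unset Strict Implicit. Unset Printing Implicit Defensive.
Import Order.TTheory GRing.Theory Num.Theory.
Import numFieldNormedType.Exports.
Local Open Scope ring_scope.

Section FedSPS.
Variables (R : realType) (d n : nat).

Definition sqnorm (v : 'rV[R]_d) : R := \sum_(k < d) v ord0 k ^+ 2.

Definition grad (f : 'rV[R]_d -> R) (x : 'rV[R]_d) : 'rV[R]_d :=
  \row_(k < d) derive f x (delta_mx ord0 k : 'rV[R]_d).

(* Polyak-type step size  min{(Fv - l)/(c ||g||^2), gb}, first term +oo if g = 0 *)
Definition sps_step (c gb Fv l : R) (g : 'rV[R]_d) : R :=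
  if sqnorm g == 0 then gb else Num.min ((Fv - l) / (c * sqnorm g)) gb.

Variables (Omega : 'I_n -> Type)
  (F : forall i : 'I_n, 'rV[R]_d -> Omega i -> R)
  (lstar : 'I_n -> R) (c gb : R) (tau : nat) (x0 : 'rV[R]_d)
  (xi : nat -> forall i : 'I_n, Omega i).

Definition fed_g (t : nat) (i : 'I_n) (x : 'rV[R]_d) : 'rV[R]_d :=
  grad (fun y => F y (xi t i)) x.
Definition fed_gamma (t : nat) (i : 'I_n) (x : 'rV[R]_d) : R :=
  sps_step c gb (F x (xi t i)) (lstar i) (fed_g t i x).

Fixpoint fedsps (t : nat) : 'I_n -> 'rV[R]_d :=
  match t with
  | 0 => fun _ => x0
  | t'.+1 =>
    let y := fun i => fedsps t' i - fed_gamma t' i (fedsps t' i) *: fed_g t' i (fedsps t' i) in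
    if (tau %| t'.+1)%N then fun _ => n%:R^-1 *: \sum_(j < n) y j else y
  end.

Definition fedsps_gamma (t : nat) (i : 'I_n) : R := fed_gamma t i (fedsps t i).

Definition fedsps_avg (t : nat) : 'rV[R]_d := n%:R^-1 *: \sum_(i < n) fedsps t i.

End FedSPS.

(* Main.v *)
Require Import Defs.
From HB Require Import structures.
From mathcomp Require Import all_boot all_order all_algebra.
From mathcomp Require Import all_classical all_reals all_analysis.
From mathcomp Require Import ring lra.
Import Order.TTheory GRing.Theory Num.Theory.
Import numFieldNormedType.Exports.
Local Open Scope ring_scope.

Lemma cs_nat (R : realFieldType) (m k : nat) (b : nat -> R) :
  (\sum_(m <= j < k) b j) ^+ 2 <= (k - m)%:R * \sum_(m <= j < k) b j ^+ 2.
Proof.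
set S := \sum_(m <= j < k) b j; set Q := \sum_(m <= j < k) b j ^+ 2.
have H0 : 0 <= \sum_(m <= j < k) \sum_(m <= l < k) (b j ^+ 2 + b l ^+ 2 - 2 * (b j * b l)).
  apply: sumr_ge0 => j _; apply: sumr_ge0 => l _.
  have -> : b j ^+ 2 + b l ^+ 2 - 2 * (b j * b l) = (b j - b l) ^+ 2 by ring.
  exact: sqr_ge0.
rewrite (eq_bigr (fun j => b j ^+ 2 * (k - m)%:R + Q - 2 * (b j * S))) in H0; last first.
  move=> j _; rewrite sumrB big_split /= sumr_const_nat mulr_natr -mulr_sumr -mulr_sumr //.
rewrite sumrB big_split /= -mulr_sumr -mulr_suml sumr_const_nat -/S -/Q -mulr_suml mulr_natr in H0.
have HS : S * S = S ^+ 2 by rewrite expr2.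
have HQ : Q *+ (k - m) = (k - m)%:R * Q by rewrite -mulr_natl.
rewrite HQ in H0. nra.
Qed.

Lemma var_le (R : realFieldType) (n : nat) (a : 'I_n -> R) : (0 < n)%N ->
  \sum_(i < n) (n%:R^-1 * \sum_(j < n) a j - a i) ^+ 2 <= \sum_(i < n) a i ^+ 2.
Proof.
move=> n0.
set S := \sum_(j < n) a j; set Q := \sum_(i < n) a i ^+ 2; set m := n%:R^-1 * S.
have nz : n%:R != 0 :> R by rewrite pnatr_eq0 -lt0n.
have hS : S = n%:R * m by rewrite /m mulrA mulfV ?mul1r.
rewrite (eq_bigr (fun i => m ^+ 2 + a i ^+ 2 - 2 * m * a i)); last by move=> i _; ring.
rewrite sumrB big_split /= -(mulr_sumr _ _ _ (2 * m)) sumr_const card_ord -/S -/Q hS.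
have : 0 <= n%:R * m ^+ 2 :> R by apply: mulr_ge0; [exact: ler0n | exact: sqr_ge0].
rewrite -mulr_natr. nra.
Qed.

Lemma sqnorm_ge0 (R : realType) d (v : 'rV[R]_d) : 0 <= sqnorm v.
Proof. by apply: sumr_ge0 => k _; exact: sqr_ge0. Qed.

Lemma sps_prop (R : realType) d (c gb Fv l : R) (g : 'rV[R]_d) :
  0 < c -> 0 < gb -> l <= Fv ->
  0 <= sps_step c gb Fv l g /\
  sps_step c gb Fv l g ^+ 2 * sqnorm g <= sps_step c gb Fv l g * (Fv - l) / c.
Proof.
move=> c0 gb0 lF; rewrite /sps_step.
have hq := @sqnorm_ge0 _ _ g.
case: eqP => [->|/eqP hn].
  split; first exact: ltW.
  rewrite mulr0; apply: divr_ge0; last exact: ltW.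
  apply: mulr_ge0; [exact: ltW | by rewrite subr_ge0].
have qp : 0 < sqnorm g by rewrite lt_def hn.
have ap : 0 <= (Fv - l) / (c * sqnorm g).
  by apply: divr_ge0; [rewrite subr_ge0 | apply: mulr_ge0; apply: ltW].
have gp : 0 <= Num.min ((Fv - l) / (c * sqnorm g)) gb.
  by rewrite le_min ap ltW.
split => //.
have hle : Num.min ((Fv - l) / (c * sqnorm g)) gb <= (Fv - l) / (c * sqnorm g) by rewrite ge_min lexx.
set m := Num.min _ _ in gp hle *.
have e : (Fv - l) / (c * sqnorm g) * sqnorm g = (Fv - l) / c.
  by field; apply/andP; split; rewrite gt_eqF.
rewrite expr2 -mulrA mulrA -[m * (Fv - l) / c]mulrA -e mulrA.
rewrite -mulrA -[m * _ * _]mulrA.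
apply: ler_wpM2l => //; apply: ler_wpM2r => //; exact: ltW.
Qed.

Section S.
Variables (R : realType) (d n : nat) (Omega : 'I_n -> Type)
  (F : forall i : 'I_n, 'rV[R]_d -> Omega i -> R)
  (lstar : 'I_n -> R) (c gb : R) (tau : nat) (x0 : 'rV[R]_d)
  (xi : nat -> forall i : 'I_n, Omega i).

Let x := fedsps F lstar c gb tau x0 xi.
Let gam := fedsps_gamma F lstar c gb tau x0 xi.
Let g j i := fed_g F xi j i (x j i).

Lemma x_const_at (s : nat) : (tau %| s)%N -> forall i i', x s i = x s i'.
Proof.
case: s => [|s] hd i i' //=.
by rewrite /x /= hd.
Qed.

Lemma x_round (t : nat) : (0 < tau)%N ->
  let s := (t %/ tau * tau)%N in
  forall k, (s <= k)%N -> (k <= t)%N -> forall i,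
  x k i = x s i - \sum_(s <= j < k) gam j i *: g j i.
Proof.
move=> tau0 s; elim=> [|k IH] hs hk i.
  have -> : s = 0%N by apply/eqP; rewrite -leqn0.
  by rewrite big_geq // subr0.
case: (ltnP s k.+1) => hsk; last first.
  have -> : s = k.+1 by apply/eqP; rewrite eqn_leq hsk hs.
  by rewrite big_geq // subr0.
have hnd : ~~ (tau %| k.+1)%N.
  apply/negP => /dvdnP [p hp].
  have ht := divn_eq t tau. have hr := ltn_pmod t tau0.
  have h1 : (t %/ tau < p)%N by rewrite -(ltn_pmul2r tau0) -hp.
  have h2 : (p < (t %/ tau).+1)%N.
    rewrite -(ltn_pmul2r tau0) -hp mulSn.
    apply: (leq_ltn_trans hk); rewrite {1}ht addnC ltn_add2r //.
  by move: h2; rewrite ltnS leqNgt h1.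
rewrite big_nat_recr //= opprD addrA -IH //; last exact: ltnW.
by rewrite /x /= (negbTE hnd).
Qed.
End S.

Theorem mainTheorem9 (R : realType) (d n : nat) (Omega : 'I_n -> Type)
  (supp : forall i : 'I_n, set (Omega i))
  (F : forall i : 'I_n, 'rV[R]_d -> Omega i -> R)
  (lstar : 'I_n -> R) (c gb : R) (tau : nat) (x0 : 'rV[R]_d)
  (xi : nat -> forall i : 'I_n, Omega i) :
  (0 < n)%N ->
  (0 < tau)%N ->
  0 < c -> 0 < gb ->
  (forall (i : 'I_n) (z : Omega i), supp i z ->
     forall x : 'rV[R]_d, differentiable (fun y => F i y z) x) ->
  (forall (i : 'I_n) (z : Omega i) (x : 'rV[R]_d), supp i z -> lstar i <= F i x z) ->
  (forall (t : nat) (i : 'I_n), supp i (xi t i)) ->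
  2 * (tau%:R) ^+ 2 <= c ->
  forall t : nat,
    let s := (t %/ tau * tau)%N in
    let x := fedsps F lstar c gb tau x0 xi in
    let gam := fedsps_gamma F lstar c gb tau x0 xi in
    n%:R^-1 * \sum_(i < n) sqnorm (fedsps_avg F lstar c gb tau x0 xi t - x t i)
    <= (2 * n%:R * tau%:R)^-1 *
       \sum_(i < n) \sum_(s <= j < t) gam j i * (F i (x j i) (xi j i) - lstar i).
Proof.
move=> n0 tau0 c0 gb0 _ hl hsupp hc t; cbv zeta.
set s := (t %/ tau * tau)%N.
set x := fedsps F lstar c gb tau x0 xi.
set gam := fedsps_gamma F lstar c gb tau x0 xi.
pose g j i := fed_g F xi j i (x j i).
pose u i := \sum_(s <= j < t) gam j i *: g j i.
pose i0 := Ordinal n0.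
pose z := x s i0.
have hst : (s <= t)%N by rewrite /s leq_trunc_div.
have hx : forall i, x t i = z - u i.
  move=> i; rewrite /z /x (@x_const_at _ _ _ _ F lstar c gb tau x0 xi s _ i0 i).
    exact: (@x_round _ _ _ _ F lstar c gb tau x0 xi t tau0 t hst (leqnn t) i).
  by rewrite /s dvdn_mull.
have nz : n%:R != 0 :> R by rewrite pnatr_eq0 -lt0n.
have hAB : \sum_(i < n) sqnorm (fedsps_avg F lstar c gb tau x0 xi t - x t i)
           <= \sum_(i < n) sqnorm (u i).
  have e : forall i k, (fedsps_avg F lstar c gb tau x0 xi t - x t i) ord0 k
        = u i ord0 k - n%:R^-1 * \sum_(j < n) u j ord0 k.
    move=> i k; rewrite /fedsps_avg !mxE summxE -/x.
    under eq_bigr => j _ do rewrite hx !mxE.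
    rewrite hx !mxE sumrB sumr_const card_ord -[z ord0 k *+ n]mulr_natr.
    rewrite mulrBr [z ord0 k * _]mulrC mulrA mulVf // mul1r; lra.
  rewrite /sqnorm exchange_big [X in _ <= X]exchange_big /=.
  apply: ler_sum => k _.
  under eq_bigr => i _ do rewrite e -sqrrN opprB.
  exact: (@var_le _ _ (fun j => u j ord0 k) n0).
set K := ((t - s)%N)%:R : R.
have hK0 : 0 <= K by exact: ler0n.
have hKt : K <= tau%:R.
  rewrite ler_nat /s {1}(divn_eq t tau) addKn; exact: ltnW (ltn_pmod t tau0).
have tp : 0 < tau%:R :> R by rewrite ltr0n.
have hKc : K / c <= (2 * tau%:R)^-1.
  rewrite ler_pdivrMr //.
  have e2 : (2 * tau%:R)^-1 * (2 * tau%:R ^+ 2) = tau%:R :> R.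
    by field; rewrite gt_eqF.
  apply: (le_trans hKt); rewrite -{1}e2; apply: ler_wpM2l => //.
have hC : forall i, sqnorm (u i) <=
    (2 * tau%:R)^-1 * \sum_(s <= j < t) gam j i * (F i (x j i) (xi j i) - lstar i).
  move=> i.
  have e1 : forall k, u i ord0 k = \sum_(s <= j < t) gam j i * g j i ord0 k.
    by move=> k; rewrite /u summxE; apply: eq_bigr => j _; rewrite mxE.
  have h1 : sqnorm (u i) <= K * \sum_(s <= j < t) gam j i ^+ 2 * sqnorm (g j i).
    rewrite /sqnorm.
    under eq_bigr => k _ do rewrite e1.
    apply: (le_trans (ler_sum _ (fun k _ => @cs_nat _ s t (fun j => gam j i * g j i ord0 k)))).
    rewrite -mulr_sumr exchange_big /=; apply: ler_wpM2l => //.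
    apply: ler_sum => j _; rewrite mulr_sumr; apply: ler_sum => k _.
    by rewrite exprMn.
  apply: (le_trans h1).
  rewrite mulr_sumr mulr_sumr; apply: ler_sum => j _.
  have [hg0 hg] := @sps_prop _ _ c gb (F i (x j i) (xi j i)) (lstar i) (g j i) c0 gb0 (hl _ _ _ (hsupp j i)).
  have hFl : 0 <= gam j i * (F i (x j i) (xi j i) - lstar i).
    apply: mulr_ge0 => //; by rewrite subr_ge0 hl.
  apply: (le_trans (ler_wpM2l hK0 hg)).
  rewrite mulrA -mulrA [X in K * X]mulrC mulrA.
  by apply: ler_wpM2r.
have ni : 0 <= n%:R^-1 :> R by rewrite invr_ge0 ler0n.
apply: (le_trans (ler_wpM2l ni hAB)).
apply: (le_trans (ler_wpM2l ni (ler_sum _ (fun i _ => hC i)))).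
rewrite -mulr_sumr mulrA.
have -> : (2 * n%:R * tau%:R)^-1 = n%:R^-1 * (2 * tau%:R)^-1 :> R.
  by rewrite -invfM; congr (_^-1); ring.
by [].
Qed.
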